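(* Let $m\ge3$, let $O^m$ be the set of odd-parity $m$-bit strings and let $u=u_1\cdots u_m\in O^m$. Let $n\ge1$ and let $m$ parties (the first being Alice) hold $X_j=(x^j_1,\dots,x^j_n)\in\{0,1\}^n$, $j=1,\dots,m$, under the promise that $x_i^1\cdots x_i^m\in A$ for every $i$, where $A$ is any subset of $\{v\in O^m: v=u \text{ or the Hamming weight of } v\oplus u \text{ is an odd multiple of } 2\}$. Let $f_u(X_1,\dots,X_m)=\bigoplus_{i=1}^n t_u(x_i^1\cdots x_i^m)$ with $t_u(w)=1$ if $w=u$ and $0$ otherwise. Suppose the parties share $n$ copies of the GHZ state $|\psi_m^{GHZ}\rangle=(|0^m\rangle+|1^m\rangle)/\sqrt2$, the $j$-th qubit of each copy held by party $j$. Then there is a protocol in which, for each $i$, party $j$ applies to its qubit of the $i$-th copy the operator $H$ if $x_i^j=u_j$ and the operator $HR$ (first $R$, then $H$) if $x_i^j\ne u_j$, measures in the computational basis, performs local classical computation, and parties $2,\dots,m$ each send one classical bit to Alice ($m-1$ classical bits in total), after which Alice outputs $f_u(X_1,\dots,X_m)$ correctly for every input satisfying the promise.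
   Context: $H$ is the Hadamard gate $H|0\rangle=(|0\rangle+|1\rangle)/\sqrt2$, $H|1\rangle=(|0\rangle-|1\rangle)/\sqrt2$, and $R$ is the phase gate $R|0\rangle=|0\rangle$, $R|1\rangle=e^{i\pi/2}|1\rangle$. Communication consists only of classical bits sent to Alice; no quantum communication is allowed. *)

(* Defs.v *)
From mathcomp Require Import all_boot all_order all_algebra algC.
Set Implicit Arguments. Unset Strict Implicit. Unset Printing Implicit Defensive.
Import Order.TTheory GRing.Theory Num.Theory.
Local Open Scope ring_scope.

Definition ob (b : bool) : 'I_2 := if b then ord_max else ord0.

Definition Hgate : 'M[algC]_2 :=
  \matrix_(r < 2, c < 2) ((if (val r == 1%N) && (val c == 1%N) then -1 else 1) / sqrtC 2).

Definition Rgate : 'M[algC]_2 :=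
  \matrix_(r < 2, c < 2) (if r == c then (if val r == 1%N then 'i else 1) else 0).

Definition HRgate : 'M[algC]_2 := Hgate *m Rgate.

Definition hdist m (v u : {ffun 'I_m -> bool}) : nat := #|[set j | v j != u j]|.

Definition odd_parity m (v : {ffun 'I_m -> bool}) : bool := odd #|[set j | v j]|.

Definition odd_mult2 (w : nat) : bool := ((2 %| w)%N && odd (w %/ 2)%N).

Definition admissible m (u : {ffun 'I_m -> bool}) : {set {ffun 'I_m -> bool}} :=
  [set v | odd_parity v && ((v == u) || odd_mult2 (hdist v u))].

Definition column m n (X : 'I_m -> 'I_n -> bool) (i : 'I_n) : {ffun 'I_m -> bool} :=
  [ffun j => X j i].

Definition f_u m n (u : {ffun 'I_m -> bool}) (X : 'I_m -> 'I_n -> bool) : bool :=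
  \big[addb/false]_(i < n) (column X i == u).

Definition local_op m n (u : {ffun 'I_m -> bool}) (X : 'I_m -> 'I_n -> bool)
  (j : 'I_m) (i : 'I_n) : 'M[algC]_2 :=
  if X j i == u j then Hgate else HRgate.

(* Amplitude of the joint computational-basis outcome a (a j i = outcome of
   party j on copy i) of the state (tensor_i (tensor_j U_{ij})) |GHZ_m>^{n},
   |GHZ_m> = (|0^m> + |1^m>)/sqrt2. *)
Definition amplitude m n (u : {ffun 'I_m -> bool}) (X : 'I_m -> 'I_n -> bool)
  (a : 'I_m -> 'I_n -> bool) : algC :=
  \prod_(i < n)
    ((\prod_(j < m) local_op u X j i (ob (a j i)) (ob false)
      + \prod_(j < m) local_op u X j i (ob (a j i)) (ob true)) / sqrtC 2).

(* Main.v *)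
Require Import Defs.
From mathcomp Require Import all_boot all_order all_algebra algC.
From mathcomp Require Import ring.
Import Order.TTheory GRing.Theory Num.Theory.
Local Open Scope ring_scope.

Lemma lop0 m n (u : {ffun 'I_m -> bool}) (X : 'I_m -> 'I_n -> bool) j i b :
  local_op u X j i (ob b) (ob false) = (sqrtC 2)^-1.
Proof.
rewrite /local_op; case: (X j i == u j).
  by rewrite /Hgate mxE /= andbF mul1r.
rewrite /HRgate mxE !big_ord_recl big_ord0 /Hgate /Rgate !mxE /=.
case: b => /=; ring.
Qed.

Lemma lop1 m n (u : {ffun 'I_m -> bool}) (X : 'I_m -> 'I_n -> bool) j i b :
  local_op u X j i (ob b) (ob true) =
  (sqrtC 2)^-1 * (if X j i == u j then 1 else 'i) * (if b then -1 else 1).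
Proof.
rewrite /local_op; case: (X j i == u j).
  by rewrite /Hgate mxE /= mulr1; case: b => /=; rewrite mulrC.
rewrite /HRgate mxE !big_ord_recl big_ord0 /Hgate /Rgate !mxE /=.
case: b => /=; ring.
Qed.

Lemma sign_prod (I : finType) (b : I -> bool) :
  \prod_(j : I) (if b j then -1 else 1) = (if \big[addb/false]_(j : I) b j then -1 else 1) :> algC.
Proof.
apply: (big_ind2 (fun x y => x = if y then -1 else 1)) => //.
by move=> x1 x2 y1 y2 -> ->; case: x2; case: y2 => /=; rewrite ?mulN1r ?opprK ?mulr1 ?mul1r.
Qed.

Lemma i_prod (I : finType) (P : pred I) :
  \prod_(j : I) (if P j then 1 else 'i) = 'i ^+ #|[set j | ~~ P j]| :> algC.
Proof.
rewrite cardsE -prodr_const [RHS]big_mkcond /=.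
by apply: eq_bigr => j _; rewrite unfold_in; case: (P j).
Qed.

Lemma xor_neg n (b : 'I_n -> bool) :
  \big[addb/false]_(i < n) ~~ b i = odd n (+) \big[addb/false]_(i < n) b i.
Proof.
elim: n b => [|n IH] b; first by rewrite !big_ord0.
rewrite !big_ord_recr /= IH; case: (b ord_max); case: (odd n);
  case: (\big[addb/false]_(i < n) b (widen_ord (leqnSn n) i)) => //.
Qed.

Lemma key m n (u : {ffun 'I_m -> bool}) (X : 'I_m -> 'I_n -> bool) (a : 'I_m -> 'I_n -> bool) i :
  column X i \in admissible u ->
  (\prod_(j < m) local_op u X j i (ob (a j i)) (ob false)
      + \prod_(j < m) local_op u X j i (ob (a j i)) (ob true)) / sqrtC 2 != 0 ->
  (column X i == u) = ~~ \big[addb/false]_(j < m) a j i.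
Proof.
move=> hadm; under eq_bigr do rewrite lop0; under [X in _ + X]eq_bigr do rewrite lop1.
rewrite !big_split /= prodr_const i_prod sign_prod.
have hk : #|[set j | ~~ (X j i == u j)]| = hdist (column X i) u.
  by rewrite /hdist; apply: eq_card => j; rewrite !inE ffunE.
rewrite hk.
set c := (sqrtC 2)^-1 ^+ _.
have c0 : c != 0 by rewrite expf_neq0 // invr_eq0 sqrtC_eq0 pnatr_eq0.
have h2 : (-1 : algC) != 1.
  apply/negP => /eqP h; have : (2 : algC) == 0 by rewrite -[2]/(1 + 1) -{1}h addNr.
  by rewrite pnatr_eq0.
move: hadm; rewrite inE => /andP [_ /orP [/eqP hv | hodd]].
  rewrite hv eqxx /hdist.
  have -> : #|[set j | u j != u j]| = 0%N by apply/eqP; rewrite cards_eq0; apply/eqP/setP => j; rewrite !inE eqxx.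
  case: (\big[addb/false]_(j < m) a j i) => //=.
  by rewrite expr0 mulr1 mulrN1 subrr mul0r eqxx.
move: hodd; rewrite /odd_mult2 => /andP [h2d hq].
have -> : 'i ^+ hdist (column X i) u = -1 :> algC.
  by rewrite -(divnK h2d) mulnC exprM sqrCi -signr_odd hq expr1.
have -> : (column X i == u) = false.
  apply/negP => /eqP hv; move: h2d hq; rewrite hv /hdist.
  have -> : #|[set j | u j != u j]| = 0%N by apply/eqP; rewrite cards_eq0; apply/eqP/setP => j; rewrite !inE eqxx.
  by [].
case: (\big[addb/false]_(j < m) a j i) => //=.
by rewrite mulr1 mulrN1 subrr mul0r eqxx.
Qed.

Theorem theorem5 (m n : nat) (hm : (3 <= m)%N) (hn : (1 <= n)%N)
  (u : {ffun 'I_m -> bool}) (hu : odd_parity u)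
  (A : {set {ffun 'I_m -> bool}}) (hA : A \subset admissible u) :
  exists (msg : 'I_m -> ('I_n -> bool) -> ('I_n -> bool) -> bool)
         (out : ('I_n -> bool) -> ('I_n -> bool) -> ('I_m -> bool) -> bool),
    forall (X : 'I_m -> 'I_n -> bool),
      (forall i : 'I_n, column X i \in A) ->
      forall (a : 'I_m -> 'I_n -> bool),
        amplitude u X a != 0 ->
        forall alice : 'I_m, val alice = 0%N ->
          out (X alice) (a alice)
              (fun j => if val j == 0%N then false else msg j (X j) (a j))
          = f_u u X.
Proof.
exists (fun j x b => \big[addb/false]_(i < n) b i).
exists (fun xA aA r => odd n (+) \big[addb/false]_(j < m)
          (if val j == 0%N then \big[addb/false]_(i < n) aA i else r j)).
move=> X hX a ha alice h0 /=.
have hk : forall i, (column X i == u) = ~~ \big[addb/false]_(j < m) a j i.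
  move=> i; apply: key; first by apply: (subsetP hA); apply: hX.
  apply: contra ha => hi; apply/prodf_eq0; by exists i.
rewrite /f_u; under [RHS]eq_bigr do rewrite hk.
rewrite xor_neg exchange_big /=; congr (_ (+) _); apply: eq_bigr => j _.
case: eqP => // hj; congr (\big[addb/false]_(i < n) a _ i).
by have -> : alice = j by apply: val_inj; rewrite /= hj h0.
Qed.
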